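(* Let $T\in\mathbb{N}$, $\alpha\in(0,1)$, $\delta\in(0,1)$, $\lambda=\sqrt T$, and let $\mathcal{H}=\{k/(H-1):k=0,\dots,H-1\}$ with $H\ge2$. Run the ExAUL algorithm (described in the context) with $\eta=2\gamma=\sqrt{\ln|\mathcal{H}|/T}$ against an adaptive adversary. Then, with probability at least $1-\delta$ over the learner's randomization, $$\frac1T\mathcal{R}_T^{\mathrm{FDR}}\le\frac{1-\mathrm{Ineff}_T}{\sqrt T}+\Big(1+\frac1{\sqrt T}\Big)\Big(4\sqrt{\frac{\ln|\mathcal{H}|}{T}}+\Big(\frac1T+\sqrt{\frac{1}{T\ln|\mathcal{H}|}}\Big)\ln\frac2\delta\Big).$$
   Context: Protocol. For $t=1,\dots,T$: an adaptive adversary chooses an input $\mathbf{x}_t$ (determining a score $f_t=f(\mathbf{x}_t,G(\mathbf{x}_t))\in[0,1)$ for a fixed generator $G$ and fixed scoring function $f$) and a feedback value $c_t\in[0,1]$ for the answer $G(\mathbf{x}_t)$; these may depend on the learner's past choices $\tau_1,\dots,\tau_{t-1}$ but not on $\tau_t$. The learner picks $\tau_t\in\mathcal{H}$; it answers $G(\mathbf{x}_t)$ if $f_t\ge\tau_t$ and outputs IDK otherwise; it observes $f_t$ and, as partial feedback, $e_t$, which equals $c_t$ when it answers (when it abstains, the losses below do not depend on $c_t$). Losses: for $\tau\in\mathcal{H}$, $a_t(\tau)=\mathbf{1}(f_t<\tau)$, $d_t(\tau,\alpha)=\mathbf{1}(f_t\ge\tau)c_t-\alpha\mathbf{1}(f_t\ge\tau)+\alpha$,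 $\ell_t(\tau)=\frac{a_t(\tau)+\lambda d_t(\tau,\alpha)}{1+\lambda}\in[0,1]$. ExAUL algorithm (parameters $\eta,\gamma>0$): $w_1(\tau)=1/|\mathcal{H}|$. At round $t$: $p_t(\tau)=w_t(\tau)/\sum_{\tau'}w_t(\tau')$; draw $\tau_t\sim p_t$; observe $f_t$ and $e_t$; define the unlocked set $\mathcal{H}_t(\tau')=\{\tau\in\mathcal{H}:\tau\le f_t\}$ if $f_t\ge\tau'$ and $\mathcal{H}_t(\tau')=\{\tau\in\mathcal{H}:\tau>f_t\}$ otherwise (for $\tau\in\mathcal{H}_t(\tau_t)$ the loss $\ell_t(\tau)$ is computable from $e_t$); set for all $\tau\in\mathcal{H}$ $$\tilde\ell_t(\tau)=\frac{\ell_t(\tau)\,\mathbf{1}(\tau\in\mathcal{H}_t(\tau_t))}{\gamma+\sum_{\bar\tau\in\mathcal{H}_t(\tau_t)}\mathbf{1}(\tau\in\mathcal{H}_t(\bar\tau))\,p_t(\bar\tau)};$$ update $w_{t+1}(\tau)\propto\exp(-\eta\sum_{s=1}^t\tilde\ell_s(\tau))$. Metrics: $\mathcal{R}_T^{\mathrm{FDR}}=\sum_{t=1}^T[\mathbf{1}(f_t\ge\tau_t)c_t-\alpha\mathbf{1}(f_t\ge\tau_t)]$ and $\mathrm{Ineff}_T=\frac1T\sum_{t=1}^T\mathbf{1}(f_t<\tau_t)$. *)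

(* Defs.v *)
From mathcomp Require Import all_boot all_order all_algebra.
From mathcomp Require Import all_classical all_reals all_analysis.
Set Implicit Arguments. Unset Strict Implicit. Unset Printing Implicit Defensive.
Import Order.TTheory GRing.Theory Num.Theory.
Local Open Scope ring_scope.

Definition ind (R : realType) (b : bool) : R := if b then 1 else 0.

Definition thr (R : realType) (H : nat) (k : 'I_H) : R := k%:R / (H.-1)%:R.

(* l_t(tau) = (a_t(tau) + lam * d_t(tau, alpha)) / (1 + lam), with score f, feedback c *)
Definition loss (R : realType) (lam alpha f c tau : R) : R :=
  (ind R (f < tau) + lam * (ind R (tau <= f) * c - alpha * ind R (tau <= f) + alpha))
  / (1 + lam).

Definition unlocked (R : realType) (H : nat) (f : R) (tau' k : 'I_H) : bool :=
  if thr R tau' <= f then thr R k <= f else f < thr R k.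

Definition ltil (R : realType) (H : nat) (lam alpha gam f c : R)
  (p : 'I_H -> R) (chosen k : 'I_H) : R :=
  loss lam alpha f c (thr R k) * ind R (unlocked f chosen k) /
  (gam + \sum_(b : 'I_H | unlocked f chosen b) ind R (unlocked f b k) * p b).

Definition pdist (R : realType) (H : nat) (eta : R) (L : 'I_H -> R) (k : 'I_H) : R :=
  expR (- eta * L k) / \sum_(j : 'I_H) expR (- eta * L j).

(* Run of ExAUL against an adaptive adversary adv (mapping the learner's past
   choices tau_1..tau_{t-1} to (f_t, c_t)), along the sequence of learner
   choices [rest].
   Returns, for each round, (p_t(tau_t), f_t, c_t, tau_t). *)
Fixpoint exaul_run (R : realType) (H : nat) (lam alpha eta gam : R)
  (adv : seq 'I_H -> R * R) (L : 'I_H -> R) (h rest : seq 'I_H)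
  : seq (R * R * R * 'I_H) :=
  match rest with
  | [::] => [::]
  | x :: r =>
      let p := pdist eta L in
      let f := (adv h).1 in let c := (adv h).2 in
      (p x, f, c, x) ::
        exaul_run lam alpha eta gam adv
          (fun k => L k + ltil lam alpha gam f c p x k) (rcons h x) r
  end.

Definition traj (R : realType) (H : nat) (lam alpha eta gam : R)
  (adv : seq 'I_H -> R * R) (taus : seq 'I_H) :=
  exaul_run lam alpha eta gam adv (fun _ => 0) [::] taus.

Definition seq_prob (R : realType) (H : nat) (lam alpha eta gam : R)
  (adv : seq 'I_H -> R * R) (taus : seq 'I_H) : R :=
  \prod_(e <- traj lam alpha eta gam adv taus) e.1.1.1.

Definition fdr_regret (R : realType) (H : nat) (lam alpha eta gam : R)
  (adv : seq 'I_H -> R * R) (taus : seq 'I_H) : R :=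
  \sum_(e <- traj lam alpha eta gam adv taus)
     (ind R (thr R e.2 <= e.1.1.2) * e.1.2 - alpha * ind R (thr R e.2 <= e.1.1.2)).

Definition ineff (R : realType) (H : nat) (T : nat) (lam alpha eta gam : R)
  (adv : seq 'I_H -> R * R) (taus : seq 'I_H) : R :=
  (T%:R)^-1 * \sum_(e <- traj lam alpha eta gam adv taus) ind R (e.1.1.2 < thr R e.2).

(* Main.v *)
Require Import Defs.
From mathcomp Require Import all_boot all_order all_algebra.
From mathcomp Require Import all_classical all_reals all_analysis.
From mathcomp Require Import ring lra.
Import Order.TTheory GRing.Theory Num.Theory.
Set Implicit Arguments. Unset Strict Implicit. Unset Printing Implicit Defensive.
Local Open Scope ring_scope.

Lemma scR (R : realType) (a b : R) : a *: b = a * b. Proof. by []. Qed.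

Lemma pade_aux {R : realType} {y : R} : 0 <= y -> (2 - y) * expR y <= 2 + y.
Proof.
move=> y0.
pose g : R -> R := ((cst 2 - id) * expR - (cst 2 + id))%R.
have dg : forall t : R, is_derive t (1:R) g ((1 - t) * expR t - 1).
  move=> t; rewrite /g.
  apply: is_derive_eq.
  rewrite /= !fctE /= !scR; lra.
have H : g y <= g 0.
  apply: (@ler0_derive1_nincry R g 0).
  - by move=> t _; rewrite /g; apply: ex_derive.
  - move=> t _; rewrite derive1E (@derive_val _ _ _ _ _ _ _ (dg t)).
    have := expR_ge1Dx (- t); rewrite expRN => h.
    have e0 := expR_gt0 t.
    rewrite subr_le0 -(@ler_pM2r _ (expR t)^-1) ?invr_gt0 // -mulrA divff ?gt_eqF // mulr1 mul1r.
    lra.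
  - by apply: derivable_within_continuous => t _; rewrite /g; apply: ex_derive.
  - by [].
  - by [].
move: H; rewrite /g !fctE /= !expR0 subr0 addr0 mulr1 subrr subr_le0.
by [].
Qed.

Lemma expN_quad {R : realType} {z : R} : 0 <= z -> expR (- z) <= 1 - z + z ^+ 2 / 2.
Proof.
move=> z0.
pose g : R -> R := ((cst 1 - id + (id * id) * cst (2^-1)) * expR)%R.
have dg : forall t : R, is_derive t (1:R) g ((t * t / 2) * expR t).
  move=> t; rewrite /g.
  apply: is_derive_eq.
  rewrite /= !fctE /= !scR; lra.
have H : g 0 <= g z.
  apply: (@ger0_derive1_ndecry R g 0).
  - by move=> t _; rewrite /g; apply: ex_derive.
  - move=> t _; rewrite derive1E (@derive_val _ _ _ _ _ _ _ (dg t)).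
    apply: mulr_ge0; last exact: expR_ge0. have := sqr_ge0 t; rewrite expr2; lra.
  - by apply: derivable_within_continuous => t _; rewrite /g; apply: ex_derive.
  - by [].
  - by [].
move: H; rewrite /g !fctE /= expR0 mul0r subr0 mulr1 expRN -expr2.
have e0 := expR_gt0 z.
move=> H; rewrite -(@ler_pM2r _ (expR z)) // mulVf ?gt_eqF //. by rewrite mul0r addr0 in H.
Qed.

Lemma exp_le_quad (R : realType) (s : R) : s <= 1 -> expR s <= 1 + s + s ^+ 2.
Proof.
move=> s1; case: (lerP 0 s) => s0.
  have h := pade_aux s0.
  have e0 := expR_gt0 s.
  have hs : 0 < 2 - s by lra.
  rewrite -(@ler_pM2r _ (2 - s)) // mulrC (le_trans h) //.
  rewrite expr2; nra.
have hs : 0 <= - s by lra.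
have := expN_quad hs; rewrite opprK sqrrN => h.
apply: (le_trans h); have := sqr_ge0 s; lra.
Qed.

Lemma term2_bound (R : realType) (eta u b : R) : 0 < eta -> 0 <= u -> 0 <= b <= 1 ->
  u * expR (eta * b / (eta / 2 + u)) <= u + eta * b.
Proof.
move=> e0 u0 /andP[b0 b1].
case: (eqVneq u 0) => [->|un0]; first by rewrite mul0r add0r mulr_ge0 // ltW.
have up : 0 < u by rewrite lt_neqAle eq_sym un0.
set w := eta * b / (eta / 2 + u).
have dp : 0 < eta / 2 + u by lra.
have hw : w * (eta / 2 + u) = eta * b by rewrite /w divfK // gt_eqF.
have w0 : 0 <= w by rewrite /w divr_ge0 ?mulr_ge0 // ?ltW.
have w2 : w < 2 by nra.
have h := pade_aux w0.
have e1 := expR_gt0 w.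
have hs : 0 < 2 - w by lra.
rewrite -(@ler_pM2r _ (2 - w)) //.
have : u * expR w * (2 - w) <= u * (2 + w) by rewrite -mulrA ler_pM2l // mulrC.
move=> h2; apply: (le_trans h2).
have hh : 0 <= (1 - b) * eta * w by apply: mulr_ge0 => //; apply: mulr_ge0; lra.
nra.
Qed.

Lemma round_ineq (R : realType) (eta x u a b : R) : 0 < eta <= 1 -> 0 <= x -> 0 <= u ->
  x + u = 1 -> 0 <= a <= 1 -> 0 <= b <= 1 ->
  x * (expR (eta * (a - b)) * (x * expR (- (eta * a / (eta / 2 + x))) + u))
  + u * (x * expR (eta * b / (eta / 2 + u)) + u) <= 1 + 2 * eta ^+ 2.
Proof.
move=> /andP[e0 e1] x0 u0 xu /andP[a0 a1] hb.
have t2 := @term2_bound R eta u b e0 u0 hb.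
move/andP: hb => [b0 b1].
set z := eta * a / (eta / 2 + x).
have dp : 0 < eta / 2 + x by lra.
have hz : z * (eta / 2 + x) = eta * a by rewrite /z divfK // gt_eqF.
have z0 : 0 <= z by rewrite /z divr_ge0 ?mulr_ge0 // ?ltW.
have xz0 : 0 <= x * z by rewrite mulr_ge0.
have xz1 : x * z <= eta * a by nra.
have z2 : z <= 2 by nra.
have ea : eta * a <= eta by nra.
have eb : eta * b <= eta by nra.
have h1 : x * expR (- z) + u <= expR (- (x * (z - z ^+ 2 / 2))).
  apply: le_trans (expR_ge1Dx _).
  have := expN_quad z0 => h.
  have : x * expR (- z) <= x * (1 - z + z ^+ 2 / 2) by apply: ler_wpM2l.
  move=> hh; rewrite expr2 in hh; rewrite expr2; nra.
set s := eta * (a - b) - x * (z - z ^+ 2 / 2).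
have sle : s <= eta * a - eta * b.
  rewrite /s expr2; have : 0 <= x * z * (2 - z) by rewrite mulr_ge0 //; lra. nra.
have sge : - (eta * b) <= s.
  rewrite /s expr2; have : 0 <= x * (z * z) by rewrite mulr_ge0 // mulr_ge0. nra.
have eb0 : 0 <= eta * b by rewrite mulr_ge0 // ltW.
have hs1 : s <= 1 by lra.
have es := @exp_le_quad R s hs1.
have ss : s ^+ 2 <= eta ^+ 2.
  rewrite !expr2; nra.
have t1 : x * (expR (eta * (a - b)) * (x * expR (- z) + u)) <= x * (1 + s + s ^+ 2).
  apply: ler_wpM2l => //.
  apply: le_trans (ler_wpM2l (expR_ge0 _) h1) _.
  by rewrite -expRD.
have k1 : x * z * (eta / 2) <= eta * (eta / 2) by nra.
have k2 : (x * z) ^+ 2 <= eta ^+ 2.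
  rewrite !expr2; nra.
have xs : x * s + x * (eta * b) = x * z * (eta / 2) + (x * z) ^+ 2 / 2.
  rewrite /s !expr2.
  have : x * (eta * a) = x * (z * (eta / 2 + x)) by rewrite hz.
  lra.
have xss : x * s ^+ 2 <= eta ^+ 2.
  have : 0 <= s ^+ 2 by exact: sqr_ge0.
  nra.
have : u * (x * expR (eta * b / (eta / 2 + u)) + u) <= u + x * (eta * b).
  rewrite mulrDr mulrCA.
  have := ler_wpM2l x0 t2. rewrite mulrDr. nra.
rewrite !expr2 in k2 ss xss xs t1 *.
lra.
Qed.

Lemma sum_tuple_cons (R : realType) (T : finType) (m : nat) (F : m.+1.-tuple T -> R) :
  \sum_(t : m.+1.-tuple T) F t = \sum_(x : T) \sum_(t : m.-tuple T) F [tuple of x :: t].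
Proof.
rewrite pair_big /=.
rewrite (reindex (fun p : T * m.-tuple T => [tuple of p.1 :: p.2])) //=.
exists (fun t : m.+1.-tuple T => (thead t, [tuple of behead t])).
  by move=> [x t] _ /=; congr pair; apply: val_inj.
by move=> t _ /=; rewrite [in RHS](tuple_eta t).
Qed.

Lemma sum_tuple0 (R : realType) (T : finType) (F : 0.-tuple T -> R) :
  \sum_(t : 0.-tuple T) F t = F [tuple].
Proof.
by rewrite (big_pred1 [tuple]) // => t /=; apply/esym/eqP; exact: tuple0.
Qed.

Definition Wt (R : realType) (n : nat) (eta : R) (L : 'I_n.+1 -> R) : R :=
  \sum_(j : 'I_n.+1) expR (- eta * L j).

Definition Gr (R : realType) (n : nat) (lam alpha eta gam : R)
  (adv : seq 'I_n.+1 -> R * R) (L : 'I_n.+1 -> R) (h : seq 'I_n.+1) (x : 'I_n.+1) : R :=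
  eta * (loss lam alpha (adv h).1 (adv h).2 (thr R x)
         - loss lam alpha (adv h).1 (adv h).2 (thr R (@ord_max n)))
  + (ln (Wt eta (fun k => L k + ltil lam alpha gam (adv h).1 (adv h).2 (pdist eta L) x k))
     - ln (Wt eta L))
  + eta * ltil lam alpha gam (adv h).1 (adv h).2 (pdist eta L) x ord_max.

Fixpoint Gsum (R : realType) (n : nat) (lam alpha eta gam : R)
  (adv : seq 'I_n.+1 -> R * R) (L : 'I_n.+1 -> R) (h rest : seq 'I_n.+1) : R :=
  match rest with
  | [::] => 0
  | x :: r => Gr lam alpha eta gam adv L h x +
      Gsum lam alpha eta gam adv
        (fun k => L k + ltil lam alpha gam (adv h).1 (adv h).2 (pdist eta L) x k) (rcons h x) r
  end.

Lemma Wt_gt0 (R : realType) (n : nat) (eta : R) (L : 'I_n.+1 -> R) : 0 < Wt eta L.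
Proof.
rewrite /Wt (bigD1 ord0) //= ltr_pwDl ?expR_gt0 // sumr_ge0 // => i _.
Qed.

Lemma det_ineq (R : realType) (n : nat) (lam alpha eta gam : R)
  (adv : seq 'I_n.+1 -> R * R) (rest : seq 'I_n.+1) :
  forall L h,
  eta * \sum_(e <- exaul_run lam alpha eta gam adv L h rest)
     (loss lam alpha e.1.1.2 e.1.2 (thr R e.2) - loss lam alpha e.1.1.2 e.1.2 (thr R (@ord_max n)))
  <= Gsum lam alpha eta gam adv L h rest + ln (Wt eta L) + eta * L ord_max.
Proof.
elim: rest => [|x r IH] L h /=.
  rewrite big_nil mulr0 add0r.
  have : expR (- eta * L ord_max) <= Wt eta L.
    rewrite /Wt (bigD1 ord_max) //= lerDl sumr_ge0 // => i _; exact: expR_ge0.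
  move=> hW.
  have := ler_ln (expR_gt0 (- eta * L ord_max)) (Wt_gt0 eta L).
  rewrite hW expRK => hh. rewrite mulNr in hh; lra.
rewrite big_cons mulrDr.
have := IH (fun k => L k + ltil lam alpha gam (adv h).1 (adv h).2 (pdist eta L) x k) (rcons h x).
rewrite /Gr /=.
lra.
Qed.

Lemma pdist_ge0 (R : realType) (n : nat) (eta : R) (L : 'I_n.+1 -> R) k : 0 <= pdist eta L k.
Proof.
rewrite /pdist divr_ge0 ?expR_ge0 // sumr_ge0 // => i _; exact: expR_ge0.
Qed.

Lemma pdist_sum1 (R : realType) (n : nat) (eta : R) (L : 'I_n.+1 -> R) :
  \sum_k pdist eta L k = 1.
Proof.
rewrite /pdist -mulr_suml divff // gt_eqF //.
exact: (Wt_gt0 eta L).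
Qed.

Lemma sum_prob1 (R : realType) (n : nat) (lam alpha eta gam : R)
  (adv : seq 'I_n.+1 -> R * R) (m : nat) :
  forall L h, \sum_(t : m.-tuple 'I_n.+1)
     \prod_(e <- exaul_run lam alpha eta gam adv L h t) e.1.1.1 = 1.
Proof.
elim: m => [|m IH] L h.
  by rewrite sum_tuple0 /= big_nil.
rewrite sum_tuple_cons.
under eq_bigr => x _.
  under eq_bigr => t _ do rewrite /= big_cons /=.
  rewrite -mulr_sumr IH mulr1.
  over.
exact: pdist_sum1.
Qed.

Lemma prod_ge0 (R : realType) (n : nat) (lam alpha eta gam : R)
  (adv : seq 'I_n.+1 -> R * R) (t : seq 'I_n.+1) :
  forall L h, 0 <= \prod_(e <- exaul_run lam alpha eta gam adv L h t) e.1.1.1.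
Proof.
elim: t => [|x r IH] L h /=; first by rewrite big_nil.
by rewrite big_cons mulr_ge0 // pdist_ge0.
Qed.

Lemma tower (R : realType) (n : nat) (lam alpha eta gam : R)
  (adv : seq 'I_n.+1 -> R * R) (c0 : R)
  (hround : forall L h, \sum_x pdist eta L x * expR (Gr lam alpha eta gam adv L h x) <= expR c0)
  (m : nat) :
  forall L h, \sum_(t : m.-tuple 'I_n.+1)
     (\prod_(e <- exaul_run lam alpha eta gam adv L h t) e.1.1.1)
     * expR (Gsum lam alpha eta gam adv L h t - m%:R * c0) <= 1.
Proof.
elim: m => [|m IH] L h.
  by rewrite sum_tuple0 /= big_nil mul0r subr0 expR0 mulr1.
rewrite sum_tuple_cons.
apply: le_trans (_ : \sum_x pdist eta L x * expR (Gr lam alpha eta gam adv L h x - c0) <= 1).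
  apply: ler_sum => x _.
  under eq_bigr => t _.
    rewrite /= big_cons /=.
    have -> : Gr lam alpha eta gam adv L h x +
      Gsum lam alpha eta gam adv
        (fun k => L k + ltil lam alpha gam (adv h).1 (adv h).2 (pdist eta L) x k) (rcons h x) t
      - m.+1%:R * c0 = (Gr lam alpha eta gam adv L h x - c0) +
      (Gsum lam alpha eta gam adv
        (fun k => L k + ltil lam alpha gam (adv h).1 (adv h).2 (pdist eta L) x k) (rcons h x) t
      - m%:R * c0) by rewrite -[m.+1%:R]natr1; lra.
    rewrite expRD.
    rewrite (_ : forall a b c d : R, a * b * (c * d) = (a * c) * (b * d)); last first.
      by move=> a b c d; rewrite mulrACA.
    over.
  rewrite /= -mulr_sumr.
  apply: ler_piMr; first by rewrite mulr_ge0 ?pdist_ge0 ?expR_ge0.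
  exact: IH.
under eq_bigr => x _ do rewrite expRB mulrA.
rewrite -mulr_suml ler_pdivrMr ?expR_gt0 // mul1r.
exact: hround.
Qed.

Lemma Wt_ratio (R : realType) (n : nat) (eta : R) (L l : 'I_n.+1 -> R) :
  Wt eta (fun k => L k + l k) = Wt eta L * \sum_k pdist eta L k * expR (- eta * l k).
Proof.
have W0 := Wt_gt0 eta L.
rewrite mulr_sumr {1}/Wt; apply: eq_bigr => k _.
rewrite /pdist -/(Wt eta L) mulrDr expRD mulrA; congr (_ * _).
by rewrite mulrCA mulfV ?mulr1 // gt_eqF.
Qed.

Lemma sum_split_sd (R : realType) (n : nat) (sd : 'I_n.+1 -> bool) (g : 'I_n.+1 -> R) :
  \sum_x g x = \sum_(x | sd x == true) g x + \sum_(x | sd x == false) g x.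
Proof.
rewrite (bigID sd) /=; congr (_ + _); apply: eq_bigl => x.
  by rewrite eqb_id.
by rewrite eqbF_neg.
Qed.

Lemma sum_side (R : realType) (n : nat) (sd : 'I_n.+1 -> bool) (p : 'I_n.+1 -> R)
  (F : bool -> R) (b : bool) :
  \sum_(x | sd x == b) p x * F (sd x) = (\sum_(x | sd x == b) p x) * F b.
Proof.
rewrite mulr_suml; apply: eq_bigr => x /eqP ->; by [].
Qed.

Lemma round_ineq2 (R : realType) (eta gam x u a b : R) : gam = eta / 2 -> 0 < eta <= 1 -> 0 <= x -> 0 <= u ->
  x + u = 1 -> 0 <= a <= 1 -> 0 <= b <= 1 ->
  x * (expR (eta * (a - b)) * (x * expR (- eta * (a / (gam + x))) + u)) +
  u * ((u * expR (- eta * (b / (gam + u))) + x) * expR (eta * (b / (gam + u))))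
  <= expR (2 * eta ^+ 2).
Proof.
move=> -> he x0 u0 xu ha hb.
apply: le_trans (expR_ge1Dx _).
apply: le_trans (round_ineq he x0 u0 xu ha hb).
rewrite !mulNr !mulrA -[u * _ * expR _]mulrA.
have -> : (u * expR (- (eta * b / (eta / 2 + u))) + x) * expR (eta * b / (eta / 2 + u))
   = x * expR (eta * b / (eta / 2 + u)) + u.
  by rewrite mulrDl -mulrA -expRD addNr expR0 mulr1 addrC.
by [].
Qed.

Lemma round (R : realType) (n : nat) (lam alpha eta gam : R)
  (adv : seq 'I_n.+1 -> R * R) (L : 'I_n.+1 -> R) (h : seq 'I_n.+1) :
  (1 <= n)%N -> 0 < eta <= 1 -> gam = eta / 2 -> 0 <= lam -> 0 < alpha < 1 ->
  0 <= (adv h).1 < 1 -> 0 <= (adv h).2 <= 1 ->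
  \sum_x pdist eta L x * expR (Gr lam alpha eta gam adv L h x) <= expR (2 * eta ^+ 2).
Proof.
move=> n1 he hg lam0 /andP[al0 al1] /andP[f0 f1] /andP[c0 c1].
rewrite /Gr.
set f := (adv h).1; set c := (adv h).2; set p := pdist eta L.
pose sd (k : 'I_n.+1) := thr R k <= f.
have sdmax : sd ord_max = false.
  rewrite /sd /thr /= divff ?pnatr_eq0 -?lt0n //.
  by apply/negbTE; rewrite -ltNge.
have unl : forall x k : 'I_n.+1, Defs.unlocked f x k = (sd k == sd x).
  move=> x k; rewrite /Defs.unlocked -/(sd x) -/(sd k).
  by case: (sd x); rewrite ?eqb_id // eqbF_neg -ltNge.
pose ls (b : bool) := (ind R (~~ b) + lam * (ind R b * c - alpha * ind R b + alpha)) / (1 + lam).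
have lossS : forall k, loss lam alpha f c (thr R k) = ls (sd k).
  by move=> k; rewrite /loss /ls ltNge.
pose P (b : bool) := \sum_(k | sd k == b) p k.
have P1 : P true + P false = 1 by rewrite /P -sum_split_sd pdist_sum1.
have Pge0 : forall b, 0 <= P b by move=> b; rewrite sumr_ge0 // => k _; exact: pdist_ge0.
have ltilE : forall x k, ltil lam alpha gam f c p x k =
    if sd k == sd x then ls (sd x) / (gam + P (sd x)) else 0.
  move=> x k; rewrite /ltil unl lossS.
  case: eqP => e; last by rewrite /ind /= mulr0 mul0r.
  rewrite /ind /= mulr1 e; congr (_ / (_ + _)).
  apply: eq_big => b; first by rewrite unl.
  by rewrite unl => /eqP eb; rewrite unl eb e eqxx mul1r.
have inner : forall x, \sum_k p k * expR (- eta * ltil lam alpha gam f c p x k) =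
    P (sd x) * expR (- eta * (ls (sd x) / (gam + P (sd x)))) + P (~~ sd x).
  move=> x; have := ltilE x; case: (sd x) => lx.
    rewrite (sum_split_sd sd).
    under eq_bigr => k /eqP hk do rewrite lx hk /=.
    under [X in _ + X = _]eq_bigr => k /eqP hk do rewrite lx hk /= mulr0 expR0 mulr1.
    by rewrite -mulr_suml.
  rewrite (sum_split_sd sd).
  under eq_bigr => k /eqP hk do rewrite lx hk /= mulr0 expR0 mulr1.
  under [X in _ + X = _]eq_bigr => k /eqP hk do rewrite lx hk /=.
  by rewrite -[X in _ + X = _]mulr_suml addrC.
pose F (b : bool) := expR (eta * (ls b - ls false)) *
   (P b * expR (- eta * (ls b / (gam + P b))) + P (~~ b)) *
   expR (eta * (if false == b then ls b / (gam + P b) else 0)).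
have summand : forall x : ordinal n.+1, expR (eta * (loss lam alpha f c (thr R x) - loss lam alpha f c (thr R (@ord_max n))) +
        (ln (Wt eta (fun k => L k + ltil lam alpha gam f c p x k)) - ln (Wt eta L)) +
        eta * ltil lam alpha gam f c p x ord_max) = F (sd x).
  move=> x; rewrite expRD expRD expRB !lnK ?posrE ?Wt_gt0 // Wt_ratio [Wt eta L * _]mulrC mulfK ?gt_eqF ?Wt_gt0 // -/p.
  by rewrite inner !lossS ltilE sdmax.
under eq_bigr => x _ do rewrite summand.
rewrite (sum_split_sd sd) !sum_side -/(P true) -/(P false).
rewrite /F /= mulr0 expR0 mulr1 subrr mulr0 expR0 mul1r.
have lsT : ls true = lam * c / (1 + lam) by rewrite /ls /ind /=; congr (_ / _); lra.
have lsF : ls false = (1 + lam * alpha) / (1 + lam) by rewrite /ls /ind /=; congr (_ / _); lra.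
have l1 : 0 < 1 + lam by lra.
have hA : 0 <= ls true <= 1.
  rewrite lsT; apply/andP; split; first by apply: divr_ge0; nra.
  rewrite ler_pdivrMr // mul1r; nra.
have hB : 0 <= ls false <= 1.
  rewrite lsF; apply/andP; split; first by apply: divr_ge0; nra.
  rewrite ler_pdivrMr // mul1r; nra.
exact: round_ineq2 hg he (Pge0 true) (Pge0 false) P1 hA hB.
Qed.



Lemma size_run (R : realType) (n : nat) (lam alpha eta gam : R)
  (adv : seq 'I_n.+1 -> R * R) (rest : seq 'I_n.+1) :
  forall L h, size (exaul_run lam alpha eta gam adv L h rest) = size rest.
Proof. by elim: rest => [|x r IH] L h //=; rewrite IH. Qed.

Lemma run_all (R : realType) (n : nat) (lam alpha eta gam : R)
  (adv : seq 'I_n.+1 -> R * R) (rest : seq 'I_n.+1) :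
  (forall h, (0 <= (adv h).1 < 1) && (0 <= (adv h).2 <= 1)) ->
  forall L h, all (fun e : R * R * R * 'I_n.+1 => (0 <= e.1.1.2 < 1) && (0 <= e.1.2 <= 1))
    (exaul_run lam alpha eta gam adv L h rest).
Proof. by move=> ha; elim: rest => [|x r IH] L h //=; rewrite ha IH. Qed.

Lemma thr_max (R : realType) (n : nat) : (1 <= n)%N -> thr R (@ord_max n) = 1.
Proof. by move=> n1; rewrite /thr /= divff // pnatr_eq0 -lt0n. Qed.

Lemma conv_sum (R : realType) (n : nat) (lam alpha : R) (s : seq (R * R * R * 'I_n.+1)) :
  (1 <= n)%N -> 0 <= lam ->
  all (fun e : R * R * R * 'I_n.+1 => (0 <= e.1.1.2 < 1) && (0 <= e.1.2 <= 1)) s ->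
  (1 + lam) * \sum_(e <- s) (loss lam alpha e.1.1.2 e.1.2 (thr R e.2)
                             - loss lam alpha e.1.1.2 e.1.2 (thr R (@ord_max n)))
  = \sum_(e <- s) ind R (e.1.1.2 < thr R e.2) - (size s)%:R
    + lam * \sum_(e <- s) (ind R (thr R e.2 <= e.1.1.2) * e.1.2
                           - alpha * ind R (thr R e.2 <= e.1.1.2)).
Proof.
move=> n1 lam0; elim: s => [|e s IH] /=; first by rewrite !big_nil; lra.
move=> /andP[/andP[/andP[f0 f1] _] hs].
rewrite !big_cons mulrDr IH // thr_max //.
rewrite /loss.
have -> : ind R (e.1.1.2 < 1) = 1 by rewrite /ind f1.
have -> : ind R (1 <= e.1.1.2) = 0 by rewrite /ind leNgt f1.
set i1 := ind R (e.1.1.2 < thr R e.2); set i2 := ind R (thr R e.2 <= e.1.1.2).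
have l1 : 1 + lam != 0 by rewrite gt_eqF //; lra.
rewrite -[(size s).+1%:R]natr1.
field.
exact: l1.
Qed.

Lemma loss_diff_le1 (R : realType) (n : nat) (lam alpha : R) (e : R * R * R * 'I_n.+1) :
  (1 <= n)%N -> 0 <= lam -> 0 < alpha < 1 ->
  (0 <= e.1.1.2 < 1) && (0 <= e.1.2 <= 1) ->
  loss lam alpha e.1.1.2 e.1.2 (thr R e.2) - loss lam alpha e.1.1.2 e.1.2 (thr R (@ord_max n)) <= 1.
Proof.
move=> n1 lam0 /andP[a0 a1] /andP[/andP[f0 f1] /andP[c0 c1]].
have h := @conv_sum R n lam alpha [:: e] n1 lam0.
move: h; rewrite /= !big_cons !big_nil !addr0 f0 f1 c0 c1 /= => /(_ isT) h.
have l1 : 0 < 1 + lam by lra.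
rewrite -(@ler_pM2l _ (1 + lam)) // h mulr1.
have i1 : 0 <= ind R (e.1.1.2 < thr R e.2) <= 1 by rewrite /ind; case: ifP => _; lra.
have i2 : 0 <= ind R (thr R e.2 <= e.1.1.2) <= 1 by rewrite /ind; case: ifP => _; lra.
have k : ind R (thr R e.2 <= e.1.1.2) * e.1.2 - alpha * ind R (thr R e.2 <= e.1.1.2) <= 1 by nra.
have := ler_wpM2l lam0 k; rewrite mulr1.
lra.
Qed.

Lemma markov (R : realType) (I : finType) (p Z : I -> R) (P : pred I) (delta : R) :
  (forall i, 0 <= p i) -> (forall i, 0 <= Z i) -> \sum_i p i = 1 ->
  \sum_i p i * Z i <= 1 -> 0 < delta ->
  (forall i, delta * Z i < 1 -> P i) -> 1 - delta <= \sum_(i | P i) p i.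
Proof.
move=> p0 Z0 s1 sZ d0 hP.
have : \sum_(i | ~~ P i) p i <= delta.
  apply: le_trans (_ : \sum_(i | ~~ P i) p i * (delta * Z i) <= delta).
    apply: ler_sum => i nPi.
    have : 1 <= delta * Z i by rewrite leNgt; apply/negP => /hP; rewrite (negbTE nPi).
    by move=> h; rewrite -{1}[p i]mulr1 ler_wpM2l.
  apply: le_trans (_ : \sum_i p i * (delta * Z i) <= delta).
    rewrite [X in _ <= X](bigID P) /= lerDr sumr_ge0 // => i _.
    by rewrite !mulr_ge0 // ltW.
  under eq_bigr => i _ do rewrite mulrCA.
  by rewrite -mulr_sumr ler_piMr // ltW.
move=> h; have := s1; rewrite (bigID P) /=; lra.
Qed.

Lemma sum_le_size (R : realType) (n : nat) (lam alpha : R) (s : seq (R * R * R * 'I_n.+1)) :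
  (1 <= n)%N -> 0 <= lam -> 0 < alpha < 1 ->
  all (fun e : R * R * R * 'I_n.+1 => (0 <= e.1.1.2 < 1) && (0 <= e.1.2 <= 1)) s ->
  \sum_(e <- s) (loss lam alpha e.1.1.2 e.1.2 (thr R e.2)
                 - loss lam alpha e.1.1.2 e.1.2 (thr R (@ord_max n))) <= (size s)%:R.
Proof.
move=> n1 lam0 ha; elim: s => [|e s IH] /=; first by rewrite big_nil.
move=> /andP[he hs]; rewrite big_cons -natr1 addrC.
apply: lerD; first exact: IH.
exact: loss_diff_le1.
Qed.

Theorem theorem1 (R : realType) (T H : nat) (alpha delta : R)
  (adv : seq 'I_H -> R * R) :
  (0 < T)%N -> (2 <= H)%N -> 0 < alpha < 1 -> 0 < delta < 1 ->
  (forall h : seq 'I_H, (0 <= (adv h).1 < 1) && (0 <= (adv h).2 <= 1)) ->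
  let lam := Num.sqrt (T%:R) in
  let eta := Num.sqrt (ln (H%:R) / T%:R) in
  let gam := eta / 2 in
  1 - delta <=
  \sum_(taus : T.-tuple 'I_H |
          fdr_regret lam alpha eta gam adv taus / T%:R <=
          (1 - ineff T lam alpha eta gam adv taus) / Num.sqrt (T%:R)
          + (1 + (Num.sqrt (T%:R))^-1) *
            (4 * Num.sqrt (ln (H%:R) / T%:R)
             + ((T%:R)^-1 + Num.sqrt ((T%:R * ln (H%:R))^-1)) * ln (2 / delta)))
    seq_prob lam alpha eta gam adv taus.
Proof.
move=> T0 H2 hal /andP[d0 d1] hadv.
case: H adv hadv H2 => [|n] adv hadv H2 //.
cbv zeta.
set lam := Num.sqrt (T%:R : R).
set eta := Num.sqrt (ln (n.+1%:R : R) / T%:R).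
set gam := eta / 2.
have n1 : (1 <= n)%N by [].
have Tp : 0 < T%:R :> R by rewrite ltr0n.
have lH : 0 < ln (n.+1%:R : R) by rewrite ln_gt0 // ltr1n.
have lam0 : 0 < lam by rewrite /lam sqrtr_gt0.
have eta0 : 0 < eta by rewrite /eta sqrtr_gt0 divr_gt0.
have eta2 : eta ^+ 2 = ln n.+1%:R / T%:R by rewrite /eta sqr_sqrtr // divr_ge0 // ltW.
have hg : gam = eta / 2 by [].
have hq : Num.sqrt ((T%:R * ln n.+1%:R)^-1) = (eta * T%:R)^-1 :> R.
  have -> : (T%:R * ln n.+1%:R)^-1 = ((eta * T%:R)^-1) ^+ 2 :> R.
    rewrite exprVn exprMn eta2; field.
    by apply/andP; split; rewrite gt_eqF.
  by rewrite sqrtr_sqr ger0_norm // invr_ge0 mulr_ge0 // ltW.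
have ld1 : ln (delta^-1) <= ln (2 / delta).
  rewrite ler_ln ?posrE ?invr_gt0 ?divr_gt0 //.
  by rewrite ler_pdivlMr // mulVf ?gt_eqF //; lra.
have ld0 : 0 <= ln (2 / delta).
  by rewrite ln_ge0 // ler_pdivlMr // mul1r; lra.
have ld2 : 0 <= ln (delta^-1).
  by rewrite ln_ge0 // invf_ge1 //; lra.
rewrite hq.
pose S (t : T.-tuple 'I_n.+1) := \sum_(e <- traj lam alpha eta gam adv t)
   (loss lam alpha e.1.1.2 e.1.2 (thr R e.2) - loss lam alpha e.1.1.2 e.1.2 (thr R (@ord_max n))).
have hall : forall t : T.-tuple 'I_n.+1, all (fun e : R * R * R * 'I_n.+1 =>
     (0 <= e.1.1.2 < 1) && (0 <= e.1.2 <= 1)) (traj lam alpha eta gam adv t).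
  by move=> t; exact: run_all.
have hsz : forall t : T.-tuple 'I_n.+1, size (traj lam alpha eta gam adv t) = T.
  by move=> t; rewrite /traj size_run size_tuple.
set L2 := ln (2 / delta).
have ld1' : ln delta^-1 <= L2 by [].
have ld0' : 0 <= L2 by [].
set K := 4 * eta + (T%:R^-1 + (eta * T%:R)^-1) * L2.
have TK : T%:R * K = 4 * eta * T%:R + L2 + L2 / eta.
  rewrite /K; field; by apply/andP; split; rewrite gt_eqF.
have alg : forall t : T.-tuple 'I_n.+1,
    eta * S t <= ln n.+1%:R + 2 * eta ^+ 2 * T%:R + ln (delta^-1) ->
    fdr_regret lam alpha eta gam adv t / T%:R <=
    (1 - ineff T lam alpha eta gam adv t) / lam + (1 + lam^-1) * K.
  move=> t hS.
  have hc := conv_sum alpha n1 (ltW lam0) (hall t).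
  rewrite hsz in hc.
  rewrite /fdr_regret /ineff.
  move: hc hS; rewrite /S.
  set Sx := \sum_(e <- _) (_ - _).
  set I := \sum_(e <- _) ind R _.
  set F := \sum_(e <- _) (_ - _).
  move=> hc hS.
  have hSK : Sx <= T%:R * K.
    rewrite -(@ler_pM2l _ eta) // TK.
    have e2 : ln n.+1%:R = eta ^+ 2 * T%:R by rewrite eta2 divfK // gt_eqF.
    have k1 : eta * (L2 / eta) = L2 by rewrite mulrC divfK // gt_eqF.
    have k2 : 0 <= eta * L2 by rewrite mulr_ge0 // ltW.
    have k3 : 0 <= eta ^+ 2 * T%:R by rewrite mulr_ge0 // ?sqr_ge0 // ltW.
    rewrite !mulrDr k1; rewrite e2 in hS.
    have h4 : eta * (4 * eta * T%:R) = 4 * (eta ^+ 2 * T%:R) by rewrite expr2; ring.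
    lra.
  have hF : lam * F <= T%:R - I + (1 + lam) * (T%:R * K).
    have := ler_wpM2l (ltW (_ : 0 < 1 + lam)) hSK.
    rewrite -/Sx; move=> /(_ ltac:(lra)) h1.
    lra.
  rewrite -subr_ge0.
  have -> : (1 - T%:R^-1 * I) / lam + (1 + lam^-1) * K - F / T%:R
     = (T%:R - I + (1 + lam) * (T%:R * K) - lam * F) / (lam * T%:R).
    by field; apply/andP; split; rewrite gt_eqF.
  by rewrite divr_ge0 ?subr_ge0 // mulr_ge0 // ltW.
have Wt0 : Wt eta (fun _ : 'I_n.+1 => 0) = n.+1%:R.
  rewrite /Wt; under eq_bigr do rewrite mulr0 expR0.
  by rewrite sumr_const card_ord.
have detS : forall t : T.-tuple 'I_n.+1,
    eta * S t <= Gsum lam alpha eta gam adv (fun _ => 0) [::] t + ln n.+1%:R.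
  move=> t; have := det_ineq lam alpha eta gam adv t (fun _ => 0) [::].
  by rewrite Wt0 mulr0 addr0.
have hp0 : forall t : T.-tuple 'I_n.+1, 0 <= seq_prob lam alpha eta gam adv t.
  by move=> t; exact: prod_ge0.
have hp1 : \sum_(t : T.-tuple 'I_n.+1) seq_prob lam alpha eta gam adv t = 1.
  exact: sum_prob1.
case: (lerP eta 1) => he.
  apply: (markov (Z := fun t : T.-tuple 'I_n.+1 =>
     expR (Gsum lam alpha eta gam adv (fun _ => 0) [::] t - T%:R * (2 * eta ^+ 2)))).
  - exact: hp0.
  - by move=> t; exact: expR_ge0.
  - exact: hp1.
  - apply: tower => L h.
    have /andP[f01 /andP[c0 c1]] := hadv h.
    apply: round => //; first by rewrite eta0 he.
      exact: ltW.
    by rewrite c0 c1.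
  - exact: d0.
  move=> t hZ; apply: alg.
  have h : Gsum lam alpha eta gam adv (fun _ => 0) [::] t - T%:R * (2 * eta ^+ 2) < ln delta^-1.
    by rewrite -ltr_expR lnK ?posrE ?invr_gt0 // -(ltr_pM2l d0) mulfV ?gt_eqF.
  have := detS t; move=> h2; lra.
apply: (markov (Z := fun _ : T.-tuple 'I_n.+1 => 0)).
- exact: hp0.
- by [].
- exact: hp1.
- by rewrite big1 // => t _; rewrite mulr0.
- exact: d0.
move=> t _; apply: alg.
have h1 : S t <= T%:R.
  rewrite /S -[X in _ <= X%:R](hsz t); apply: sum_le_size => //; exact: ltW.
have h2 : eta * S t <= eta * T%:R by rewrite ler_pM2l.
have h3 : eta * T%:R <= 2 * eta ^+ 2 * T%:R.
  rewrite expr2; have : 0 <= (eta - 1) * eta * T%:R by rewrite !mulr_ge0 // ?ltW //; lra.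
  nra.
lra.
Qed.
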